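(* Let $\alpha$ be any smooth section over $\mathcal D_e^-$ of $\mathrm{End}^1(E)$ with $[\alpha,\delta]=\alpha\delta+\delta\alpha=1$ ($\alpha$ need not square to zero). Then the 1-form $\kappa=\mathrm{Tr_s}[\alpha\,\mathbf d\delta]$ on $\mathcal D_e^-$ does not depend on the choice of $\alpha$, and it is closed. Moreover, for every smooth section $f$ of $T^*\mathcal D_e^-\widehat\otimes\mathrm{End}^0(E)$, $$\mathrm{Tr_s}\big[\alpha[f,\delta]\big]=\mathrm{Tr_s}[f] .$$
   Context: $E=\bigoplus_{i=p}^qE^i$ is a finite-dimensional complex $\mathbb Z$-graded vector space. $\mathrm{End}(E)$ is graded by degree and $\mathbb Z_2$-graded by parity, and $[A,B]=AB-(-1)^{\deg A\deg B}BA$ is the supercommutator. $\mathcal D_e^-$ is the (nonempty) manifold of exact differentials $\delta\in\mathrm{End}^{-1}(E)$ with $\delta^2=0$. $\mathbf d$ is the de Rham operator on $\mathcal D_e^-$, and $\delta$ is the tautological function. Products are in $\Lambda(T^*\mathcal D_e^-)\widehat\otimes\mathrm{End}(E)$ (graded tensor product, 1-forms odd). $\mathrm{Tr_s}[A]=\mathrm{Tr}[(-1)^NA]$, where $N$ is the number operator ($N=i$ on $E^i$), extended to $\Lambda(T^*\mathcal D_e^-)$-valued endomorphisms by $\mathrm{Tr_s}[\beta A]=\beta\,\mathrm{Tr_s}[A]$. *)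

(* Defs.v *)
From mathcomp Require Import all_boot all_order all_algebra.
From mathcomp Require Import complex.
From mathcomp Require Import reals topology normedtype derive.
Import GRing.Theory.

Set Implicit Arguments.
Unset Strict Implicit.
Unset Printing Implicit Defensive.

Local Open Scope ring_scope.

Section SuperDefs.
Variable R : realType.

Definition prm (m : nat) : normedModType R := 'rV[R]_m.

Fixpoint diter (m : nat) (vs : seq (prm m)) (g : prm m -> R) : prm m -> R :=
  if vs is v :: vs' then fun x => @derive R (prm m) R^o (diter vs' g) x v else g.

Definition smoothR (m : nat) (g : prm m -> R) : Prop :=
  forall vs : seq (prm m),
    continuous (diter vs g : prm m -> R^o) /\
    forall x v, @derivable R (prm m) R^o (diter vs g) x v.

Definition smoothC (m : nat) (g : prm m -> R[i]) : Prop :=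
  smoothR (fun x => Re (g x)) /\ smoothR (fun x => Im (g x)).

Definition smoothM (m n : nat) (phi : prm m -> 'M[R[i]]_n) : Prop :=
  forall i j, smoothC (fun x => phi x i j).

Definition derivableC (m : nat) (g : prm m -> R[i]) (x w : prm m) : Prop :=
  @derivable R (prm m) R^o (fun y => Re (g y)) x w /\
  @derivable R (prm m) R^o (fun y => Im (g y)) x w.

Definition dirC (m : nat) (g : prm m -> R[i]) (x w : prm m) : R[i] :=
  (@derive R (prm m) R^o (fun y => Re (g y)) x w
     +i* @derive R (prm m) R^o (fun y => Im (g y)) x w)%C.

Definition dirM (m n : nat) (phi : prm m -> 'M[R[i]]_n) (x w : prm m)
  : 'M[R[i]]_n := \matrix_(i, j) dirC (fun y => phi y i j) x w.

(* The graded space E = C^n, with basis vector e_i in degree deg i.    *)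
(* End(E) = 'M_n acting on column vectors; A i j is the e_i-coefficient *)
(* of A e_j.                                                           *)
Variable n : nat.
Variable deg : 'I_n -> int.

Notation Mat := 'M[R[i]]_n.

Definition homog (k : int) (A : Mat) : Prop :=
  forall i j, A i j != 0 -> deg i = (deg j + k)%R.

Definition trs (A : Mat) : R[i] := \sum_(i < n) (-1) ^ (deg i) * A i i.

Definition exact_diff (d : Mat) : Prop :=
  homog (-1) d /\ d *m d = 0 /\
  (forall x : 'cV[R[i]]_n, d *m x = 0 -> exists y : 'cV[R[i]]_n, x = d *m y).

Definition mapsInto (m : nat) (phi : prm m -> Mat) : Prop :=
  forall x, exact_diff (phi x).

Definition smooth_section (a : Mat -> Mat) : Prop :=
  forall m (phi : prm m -> Mat), smoothM phi -> mapsInto phi ->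
    smoothM (fun x => a (phi x)).

Definition tangent (d v : Mat) : Prop :=
  exists m (phi : prm m -> Mat) (x w : prm m),
    [/\ smoothM phi, mapsInto phi, phi x = d & dirM phi x w = v].

(* End(E)-valued 1-forms: an eform omega gives at each point d of D_e^-  *)
(* and each tangent vector v the endomorphism omega d v.               *)
(* Products in Lambda(T^* D) (x) End(E) follow the Koszul sign rule    *)
(* (1-forms odd).                                                      *)
Definition eform := Mat -> Mat -> Mat.
Definition sform := Mat -> Mat -> R[i].

(* the End-valued 1-form  d delta  (de Rham differential of the tautological function) *)
Definition d_delta : eform := fun _ v => v.

Definition taut : Mat -> Mat := fun d => d.

(* A * omega, for A a section of End(E) of parity p (Koszul sign (-1)^p) *)
Definition lmul (p : nat) (A : Mat -> Mat) (omega : eform) : eform :=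
  fun d v => (-1) ^+ p *: (A d *m omega d v).

Definition rmul (omega : eform) (B : Mat -> Mat) : eform :=
  fun d v => omega d v *m B d.

(* supercommutator [omega, B], omega a 1-eform with End-part of parity p
   (total parity p+1), B a section of End(E) of parity q *)
Definition scomm (omega : eform) (p : nat) (B : Mat -> Mat) (q : nat) : eform :=
  fun d v => rmul omega B d v - (-1) ^+ (p.+1 * q) *: lmul q B omega d v.

Definition trs_form (omega : eform) : sform := fun d v => trs (omega d v).

Definition smooth_sform (k : sform) : Prop :=
  forall m (phi : prm m -> Mat) (w : prm m),
    smoothM phi -> mapsInto phi -> smoothC (fun y => k (phi y) (dirM phi y w)).

(* closed (smooth) scalar 1-eform: d k = 0, i.e. the pull-back of k by every
   smooth 2-parameter map into D_e^- is closed *)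
Definition closed_sform (k : sform) : Prop :=
  smooth_sform k /\
  forall (phi : prm 2 -> Mat), smoothM phi -> mapsInto phi ->
    forall x,
      let e1 : prm 2 := delta_mx 0 0 in
      let e2 : prm 2 := delta_mx 0 1 in
      dirC (fun y => k (phi y) (dirM phi y e2)) x e1 =
      dirC (fun y => k (phi y) (dirM phi y e1)) x e2.

Definition form_section (p : int) (f : eform) : Prop :=
  [/\ (forall d v, exact_diff d -> tangent d v -> homog p (f d v)),
      (forall d u v (a : R), exact_diff d -> tangent d u -> tangent d v ->
          f d ((a%:C)%C *: u + v) = (a%:C)%C *: f d u + f d v) &
      (forall m (phi : prm m -> Mat) (w : prm m),
          smoothM phi -> mapsInto phi ->
          smoothM (fun y => f (phi y) (dirM phi y w)))].

Definition admissible_alpha (a : Mat -> Mat) : Prop :=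
  smooth_section a /\
  forall d, exact_diff d -> homog 1 (a d) /\ a d *m d + d *m a d = 1%:M.

(* kappa = Tr_s[alpha d delta]  (alpha odd) *)
Definition kappa (a : Mat -> Mat) : sform := trs_form (lmul 1 a d_delta).

End SuperDefs.

(* Main.v *)
Require Import Defs.
From mathcomp Require Import all_boot all_order all_algebra.
From mathcomp Require Import complex.
From mathcomp Require Import ring lra.
From mathcomp Require Import boolp classical_sets functions reals topology normedtype derive.
Import Order.TTheory GRing.Theory Num.Theory numFieldNormedType.Exports.
Local Open Scope ring_scope.

Set Implicit Arguments.
Unset Strict Implicit.
Unset Printing Implicit Defensive.


Section RealSmooth.
Variables (R : realType) (m : nat).
Notation V := (prm R m).
Implicit Types (f g : V -> R) (vs : seq V).

Lemma diter_cat vs ws f : diter (vs ++ ws) f = diter vs (diter ws f).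
Proof. by elim: vs => //= v vs ->. Qed.

Lemma smoothR_der f (w : V) : smoothR f -> smoothR (fun x => @derive R V R^o f x w).
Proof.
move=> sf vs; have := sf (vs ++ [:: w]); rewrite diter_cat; exact.
Qed.

Lemma smoothR_derivable f x v : smoothR f -> @derivable R V R^o f x v.
Proof. by move=> sf; case: (sf [::]) => _; apply. Qed.

Lemma smoothR_cont f : smoothR f -> continuous (f : V -> R^o).
Proof. by move=> sf; case: (sf [::]). Qed.

Lemma diter_cont f vs : smoothR f -> continuous (diter vs f : V -> R^o).
Proof. by move=> sf; case: (sf vs). Qed.

Lemma diter_der f vs x v : smoothR f -> @derivable R V R^o (diter vs f) x v.
Proof. by move=> sf; case: (sf vs) => _; apply. Qed.

Lemma smoothR_cst (c : R) : smoothR (fun _ : V => c).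
Proof.
suff H : forall vs, exists c', diter vs (fun _ : V => c) = (fun _ => c').
  move=> vs; have [c' ->] := H vs; split.
    exact: cst_continuous.
  by move=> x v; apply: (derivable_cst (c' : R^o)).
elim=> [|v vs [c' IH]] /=; first by exists c.
exists 0; apply/funext => x; rewrite IH.
exact: (derive_cst (c' : R^o)).
Qed.

Lemma smoothR_add f g : smoothR f -> smoothR g -> smoothR (fun x => f x + g x).
Proof.
move=> sf sg.
have H : forall vs, diter vs (fun x => f x + g x) = (fun x => diter vs f x + diter vs g x).
  elim=> // v vs IH /=; apply/funext => x; rewrite IH.
  have := @deriveD R V R^o (diter vs f) (diter vs g) x v.
  by apply; apply: diter_der.
move=> vs; rewrite H; split.
  by move=> x; apply: (@continuousD R R^o); apply: diter_cont.
by move=> x v; apply: (@derivableD R V R^o); apply: diter_der.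
Qed.

Definition prodsum f g (l : seq (seq V * seq V)) : V -> R :=
  fun x => \sum_(p <- l) diter p.1 f x * diter p.2 g x.

Definition pstep (v : V) (l : seq (seq V * seq V)) :=
  flatten [seq [:: (v :: p.1, p.2); (p.1, v :: p.2)] | p <- l].

Lemma prodsum_der f g l x v : smoothR f -> smoothR g ->
  @derivable R V R^o (prodsum f g l) x v /\
  @derive R V R^o (prodsum f g l) x v = prodsum f g (pstep v l) x.
Proof.
move=> sf sg; elim: l => [|p l [IHd IHe]].
  rewrite /prodsum /pstep /=.
  have -> : (fun x : V => \sum_(p <- [::]) diter p.1 f x * diter p.2 g x) = cst (0 : R^o).
    by apply/funext => y; rewrite big_nil.
  by rewrite big_nil; split; [apply: derivable_cst | apply: derive_cst].
have E : prodsum f g (p :: l) =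
   ((fun y => diter p.1 f y * diter p.2 g y : R^o) + prodsum f g l)%R.
  by apply/funext => y; rewrite /prodsum big_cons.
have df1 : @derivable R V R^o (diter p.1 f) x v by apply: diter_der.
have dg1 : @derivable R V R^o (diter p.2 g) x v by apply: diter_der.
have dm : @derivable R V R^o (fun y => diter p.1 f y * diter p.2 g y : R^o) x v.
  exact: (@derivableM R V (diter p.1 f) (diter p.2 g)).
rewrite E; split; first exact: derivableD.
rewrite deriveD // (@deriveM R V (diter p.1 f) (diter p.2 g)) // IHe.
rewrite /prodsum /pstep /= !big_cons /=.
by rewrite addrA [_ *: _ + _]addrC /GRing.scale /= [diter p.2 g x * _]mulrC.
Qed.

Lemma prodsum_cont f g l : smoothR f -> smoothR g -> continuous (prodsum f g l : V -> R^o).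
Proof.
move=> sf sg; elim: l => [|p l IH].
  have -> : prodsum f g [::] = cst (0 : R^o) by apply/funext => y; rewrite /prodsum big_nil.
  exact: cst_continuous.
have -> : prodsum f g (p :: l) =
   ((fun y => diter p.1 f y * diter p.2 g y : R^o) + prodsum f g l)%R.
  by apply/funext => y; rewrite /prodsum big_cons.
move=> x; apply: (@continuousD R R^o); last exact: IH.
by apply: (@continuousM R V (diter p.1 f) (diter p.2 g)); apply: diter_cont.
Qed.

Lemma smoothR_mul f g : smoothR f -> smoothR g -> smoothR (fun x => f x * g x).
Proof.
move=> sf sg.
have H : forall vs, exists l, diter vs (fun x => f x * g x) = prodsum f g l.
  elim=> [|v vs [l IH]].
    exists [:: ([::], [::])]; apply/funext => y.
    by rewrite /prodsum big_cons big_nil addr0.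
  exists (pstep v l); rewrite /= IH; apply/funext => y.
  by case: (prodsum_der l y v sf sg).
move=> vs; have [l ->] := H vs; split; first exact: prodsum_cont.
by move=> x v; case: (prodsum_der l x v sf sg).
Qed.

Lemma smoothR_opp f : smoothR f -> smoothR (fun x => - f x).
Proof.
move=> sf; have := smoothR_mul (smoothR_cst (-1)) sf.
by have -> : (fun x => -1 * f x) = (fun x => - f x) by apply/funext => y; rewrite mulN1r.
Qed.

Lemma smoothR_sub f g : smoothR f -> smoothR g -> smoothR (fun x => f x - g x).
Proof. by move=> sf sg; apply: smoothR_add => //; apply: smoothR_opp. Qed.

End RealSmooth.


Section Schwarz.
Variables (R : realType) (V : normedModType R).
Implicit Types (F : V -> R^o).

Lemma line_derive F (p w : V) (t : R) : derivable F (p + t *: w) w ->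
  is_derive t 1 (fun s : R => F (p + s *: w) : R^o) ('D_w F (p + t *: w)).
Proof.
move=> dF.
have E : (fun h : R => h^-1 *: (((fun s : R => F (p + s *: w)) \o shift t) (h *: (1:R)) - F (p + t *: w)))
  = (fun h : R => h^-1 *: ((F \o shift (p + t *: w)) (h *: w) - F (p + t *: w))).
  apply/funext => h /=; congr (_ *: (F _ - _)).
  by rewrite [h *: 1]mulr1 scalerDl addrCA.
have dg : derivable (fun s : R => F (p + s *: w) : R^o) t 1.
  by rewrite /derivable /= E.
apply: DeriveDef => //.
by rewrite /derive /= E.
Qed.

Lemma MVT_all (g : R -> R) (a b : R) : (forall t, derivable g t 1) -> a < b ->
  exists2 c, a < c < b & g b - g a = 'D_1 g c * (b - a).
Proof.
move=> dg ab.
have := @MVT R g (fun t => 'D_1 g t) a b ab.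
case.
- by move=> t _; apply: derivableP.
- apply/continuous_subspaceT => t.
  by apply: differentiable_continuous; apply/derivable1_diffP.
by move=> c; rewrite in_itv /= => cab E; exists c.
Qed.

Definition DD F (u v : V) : V -> R^o := fun y => 'D_u (fun z => 'D_v F z : R^o) y.

Definition Delta F (u v x : V) (h : R) : R :=
  F (x + h *: u + h *: v) - F (x + h *: u) - F (x + h *: v) + F x.

Lemma mixed_mvt F (u v x : V) (h : R) :
  (forall y, derivable F y v) -> (forall y, derivable (fun z => 'D_v F z : R^o) y u) ->
  0 < h -> exists s, exists t, [/\ 0 < s < h, 0 < t < h &
     Delta F u v x h = h ^+ 2 * DD F u v (x + s *: u + t *: v)].
Proof.
move=> dF ddF h0.
pose g := fun s : R => (F (x + h *: u + s *: v) - F (x + s *: v) : R^o).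
have gd : forall t : R, is_derive t 1 g ('D_v F (x + h *: u + t *: v) - 'D_v F (x + t *: v)).
  move=> t; apply: is_deriveB; apply: line_derive; exact: dF.
have [t /andP[t0 th] Eg] := MVT_all (fun t => (gd t).(ex_derive)) h0.
pose k := fun s : R => ('D_v F (x + t *: v + s *: u) : R^o).
have kd : forall s : R, is_derive s 1 k (DD F u v (x + t *: v + s *: u)).
  move=> s; apply: line_derive; exact: ddF.
have [s /andP[s0 sh] Ek] := MVT_all (fun s => (kd s).(ex_derive)) h0.
exists s, t; split; [by rewrite s0 | by rewrite t0 |].
have -> : Delta F u v x h = g h - g 0.
  by rewrite /Delta /g !scale0r !addr0; ring.
rewrite Eg (@derive_val _ _ _ _ _ _ _ (gd t)).
have -> : 'D_v F (x + h *: u + t *: v) - 'D_v F (x + t *: v) = k h - k 0.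
  by rewrite /k scale0r addr0 [x + h *: u + _]addrAC.
rewrite Ek (@derive_val _ _ _ _ _ _ _ (kd s)) subr0 [x + s *: u + _]addrAC.
by rewrite expr2 -mulrA mulrC.
Qed.

Lemma Delta_sym F u v x h : Delta F v u x h = Delta F u v x h.
Proof. rewrite /Delta [x + h *: v + _]addrAC; ring. Qed.

Lemma schwarz F (u v x : V) :
  (forall y, derivable F y v) -> (forall y, derivable F y u) ->
  (forall y, derivable (fun z => 'D_v F z : R^o) y u) ->
  (forall y, derivable (fun z => 'D_u F z : R^o) y v) ->
  {for x, continuous (DD F u v)} -> {for x, continuous (DD F v u)} ->
  DD F u v x = DD F v u x.
Proof.
move=> dFv dFu ddv ddu c1 c2.
set a := DD F u v x. set b := DD F v u x.
have [//|ne] := eqVneq a b.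
pose e : R := `|a - b| / 2.
have e0 : 0 < e by rewrite /e divr_gt0 // normr_gt0 subr_eq0.
have n1 : \forall y \near x, `|a - DD F u v y| < e.
  by move: c1 => /cvgrPdist_lt; apply.
have n2 : \forall y \near x, `|b - DD F v u y| < e.
  by move: c2 => /cvgrPdist_lt; apply.
have [r r0 Hr] := (nbhs_ballP _ _).1 (filterI n1 n2).
clear n1 n2 c1 c2; clearbody a b.
pose K : R := `|u| + `|v| + 1.
have K0 : 0 < K by rewrite /K ltr_pwDr // addr_ge0.
pose h : R := r / (2 * K).
have h0 : 0 < h by rewrite /h divr_gt0 // mulr_gt0.
have hK : h * K < r.
  rewrite /h -mulrA invfM -mulrA mulVf ?gt_eqF // mulr1.
  by rewrite ltr_pdivrMr // ltr_pMr // ltr1n.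
have inball : forall s t, 0 < s < h -> 0 < t < h -> ball x r (x + s *: u + t *: v).
  move=> s t /andP[s0 sh] /andP[t0 th]; rewrite -ball_normE /ball_ /=.
  rewrite opprD addrA opprD addrA subrr sub0r -opprD normrN.
  apply: (le_lt_trans (ler_normD _ _)); rewrite !normrZ.
  apply: le_lt_trans hK; rewrite /K mulrDr mulrDr mulr1.
  rewrite -addrA lerD //.
    by rewrite ger0_norm ?(ltW s0) //; apply: ler_wpM2r => //; apply: ltW.
  rewrite ger0_norm ?(ltW t0) // ler_wpDr ?(ltW h0) //.
  by apply: ler_wpM2r => //; apply: ltW.
have [s1 [t1 [st1 tt1 E1]]] := mixed_mvt x dFv ddv h0.
have [s2 [t2 [st2 tt2 E2]]] := mixed_mvt x dFu ddu h0.
rewrite Delta_sym in E2.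
have {}E2 := etrans (esym E1) E2.
have h2 : h ^+ 2 != 0 by rewrite expf_neq0 // gt_eqF.
have E := mulfI h2 E2.
have [B1 _] := Hr _ (inball _ _ st1 tt1).
have [_ B2] := Hr _ (inball _ _ tt2 st2).
have P : x + t2 *: u + s2 *: v = x + s2 *: v + t2 *: u by rewrite addrAC.
have {}B2 : `|b - DD F u v (x + s1 *: u + t1 *: v)| < e by rewrite E -P.
move: B1 B2; move: (DD F u v (x + s1 *: u + t1 *: v)) => D B1 B2.
have : `|a - b| < e + e.
  apply: (le_lt_trans (ler_distD D _ _)).
  by rewrite distrC in B2; exact: ltrD B1 B2.
rewrite /e.
move: (`|a - b|) => z.
by rewrite -splitr ltxx.
Qed.

End Schwarz.


Local Notation Re := complex.Re.
Local Notation Im := complex.Im.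

Section Cx.
Variables (R : realType) (m : nat).
Notation V := (prm R m).
Implicit Types (g h : V -> R[i]).

Lemma ReD (a b : R[i]) : Re (a + b) = Re a + Re b. Proof. by case: a => ? ?; case: b => ? ?; reflexivity. Qed.
Lemma ImD (a b : R[i]) : Im (a + b) = Im a + Im b. Proof. by case: a => ? ?; case: b => ? ?; reflexivity. Qed.
Lemma ReM (a b : R[i]) : Re (a * b) = Re a * Re b - Im a * Im b. Proof. by case: a => ? ?; case: b => ? ?; reflexivity. Qed.
Lemma ImM (a b : R[i]) : Im (a * b) = Re a * Im b + Im a * Re b. Proof. by case: a => ? ?; case: b => ? ?; reflexivity. Qed.
Lemma Re0 : Re (0 : R[i]) = 0. Proof. reflexivity. Qed.
Lemma Im0 : Im (0 : R[i]) = 0. Proof. reflexivity. Qed.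

Lemma complex_ext (a b : R[i]) : Re a = Re b -> Im a = Im b -> a = b.
Proof. by case: a => ? ?; case: b => ? ? /= -> ->. Qed.

Lemma smoothC_derivable g x w : smoothC g -> derivableC g x w.
Proof. by case=> s1 s2; split; apply: smoothR_derivable. Qed.

Lemma smoothC_cst (c : R[i]) : smoothC (fun _ : V => c).
Proof. by split; apply: smoothR_cst. Qed.

Lemma smoothC_add g h : smoothC g -> smoothC h -> smoothC (fun y => g y + h y).
Proof.
case=> g1 g2 [h1 h2]; split.
  have -> : (fun y => Re (g y + h y)) = (fun y => Re (g y) + Re (h y)).
    by apply/funext => y; rewrite ReD.
  exact: smoothR_add.
have -> : (fun y => Im (g y + h y)) = (fun y => Im (g y) + Im (h y)).
  by apply/funext => y; rewrite ImD.
exact: smoothR_add.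
Qed.

Lemma smoothC_mul g h : smoothC g -> smoothC h -> smoothC (fun y => g y * h y).
Proof.
case=> g1 g2 [h1 h2]; split.
  have -> : (fun y => Re (g y * h y)) = (fun y => Re (g y) * Re (h y) - Im (g y) * Im (h y)).
    by apply/funext => y; rewrite ReM.
  by apply: smoothR_sub; apply: smoothR_mul.
have -> : (fun y => Im (g y * h y)) = (fun y => Re (g y) * Im (h y) + Im (g y) * Re (h y)).
  by apply/funext => y; rewrite ImM.
by apply: smoothR_add; apply: smoothR_mul.
Qed.

Lemma smoothC_sum k (F : 'I_k -> V -> R[i]) :
  (forall i, smoothC (F i)) -> smoothC (fun y => \sum_(i < k) F i y).
Proof.
elim: k F => [|k IH] F sF.
  have -> : (fun y => \sum_(i < 0) F i y) = (fun _ => 0) by apply/funext => y; rewrite big_ord0.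
  exact: smoothC_cst.
have -> : (fun y => \sum_(i < k.+1) F i y) = (fun y => \sum_(i < k) F (widen_ord (leqnSn k) i) y + F ord_max y).
  by apply/funext => y; rewrite big_ord_recr.
apply: smoothC_add => //; exact: IH.
Qed.

Lemma smoothC_dir g w : smoothC g -> smoothC (fun y => dirC g y w).
Proof. by case=> g1 g2; split; apply: smoothR_der. Qed.

Lemma dirC_add g h x w : smoothC g -> smoothC h ->
  dirC (fun y => g y + h y) x w = dirC g x w + dirC h x w.
Proof.
case=> g1 g2 [h1 h2]; rewrite /dirC.
have -> : (fun y => Re (g y + h y)) = ((fun y => Re (g y) : R^o) + (fun y => Re (h y)))%R.
  by apply/funext => y; rewrite ReD.
have -> : (fun y => Im (g y + h y)) = ((fun y => Im (g y) : R^o) + (fun y => Im (h y)))%R.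
  by apply/funext => y; rewrite ImD.
by rewrite !deriveD //; apply: smoothR_derivable.
Qed.

Lemma dirC_cst (c : R[i]) x w : dirC (fun _ : V => c) x w = 0.
Proof.
rewrite /dirC.
have := derive_cst (Re c : R^o) x w; rewrite /cst => ->.
have := derive_cst (Im c : R^o) x w; rewrite /cst => ->.
by [].
Qed.

Lemma dirC_mul g h x w : smoothC g -> smoothC h ->
  dirC (fun y => g y * h y) x w = dirC g x w * h x + g x * dirC h x w.
Proof.
case=> g1 g2 [h1 h2]; rewrite /dirC.
have -> : (fun y => Re (g y * h y)) = ((fun y => Re (g y) : R^o) * (fun y => Re (h y))
    - (fun y => Im (g y) : R^o) * (fun y => Im (h y)))%R.
  by apply/funext => y; rewrite ReM.
have -> : (fun y => Im (g y * h y)) = ((fun y => Re (g y) : R^o) * (fun y => Im (h y))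
    + (fun y => Im (g y) : R^o) * (fun y => Re (h y)))%R.
  by apply/funext => y; rewrite ImM.
have dg1 := smoothR_derivable (x:=x) (v:=w) g1. have dg2 := smoothR_derivable (x:=x) (v:=w) g2.
have dh1 := smoothR_derivable (x:=x) (v:=w) h1. have dh2 := smoothR_derivable (x:=x) (v:=w) h2.
move: dg1 dg2 dh1 dh2.
set G1 := (fun y : V => Re (g y)). set G2 := (fun y : V => Im (g y)).
set H1 := (fun y : V => Re (h y)). set H2 := (fun y : V => Im (h y)).
move=> dg1 dg2 dh1 dh2.
have dA := derivableM dg1 dh1. have dB := derivableM dg2 dh2.
have dC := derivableM dg1 dh2. have dD := derivableM dg2 dh1.
rewrite (deriveB dA dB) (deriveD dC dD).
rewrite (deriveM dg1 dh1) (deriveM dg2 dh2) (deriveM dg1 dh2) (deriveM dg2 dh1).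
move: ('D_w G1 x) ('D_w G2 x) ('D_w H1 x) ('D_w H2 x) => a1 a2 b1 b2.
rewrite /G1 /G2 /H1 /H2 /GRing.scale /=.
apply: complex_ext; rewrite /= ?ReD ?ImD ?ReM ?ImM /=; ring.
Qed.

Lemma dirC_sum k (F : 'I_k -> V -> R[i]) x w :
  (forall i, smoothC (F i)) ->
  dirC (fun y => \sum_(i < k) F i y) x w = \sum_(i < k) dirC (F i) x w.
Proof.
elim: k F => [|k IH] F sF.
  have -> : (fun y => \sum_(i < 0) F i y) = (fun _ => 0) by apply/funext => y; rewrite big_ord0.
  by rewrite dirC_cst big_ord0.
have -> : (fun y => \sum_(i < k.+1) F i y) = (fun y => \sum_(i < k) F (widen_ord (leqnSn k) i) y + F ord_max y).
  by apply/funext => y; rewrite big_ord_recr.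
rewrite dirC_add //; last by apply: smoothC_sum.
by rewrite IH // big_ord_recr.
Qed.

Lemma dirC_ext g h x w : (forall y, g y = h y) -> dirC g x w = dirC h x w.
Proof. by move=> E; have -> : g = h by apply/funext. Qed.

End Cx.


Section Mx.
Variables (R : realType) (m n : nat) (deg : 'I_n -> int).
Notation V := (prm R m).
Notation Mat := 'M[R[i]]_n.
Implicit Types (A B : V -> Mat).

Lemma smoothM_mul A B : smoothM A -> smoothM B -> smoothM (fun y => A y *m B y).
Proof.
move=> sA sB i j.
have -> : (fun y => (A y *m B y) i j) = (fun y => \sum_k A y i k * B y k j).
  by apply/funext => y; rewrite mxE.
by apply: smoothC_sum => k; apply: smoothC_mul.
Qed.

Lemma smoothM_add A B : smoothM A -> smoothM B -> smoothM (fun y => A y + B y).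
Proof.
move=> sA sB i j.
have -> : (fun y => (A y + B y) i j) = (fun y => A y i j + B y i j).
  by apply/funext => y; rewrite mxE.
exact: smoothC_add.
Qed.

Lemma smoothM_scale (c : R[i]) A : smoothM A -> smoothM (fun y => c *: A y).
Proof.
move=> sA i j.
have -> : (fun y => (c *: A y) i j) = (fun y => c * A y i j).
  by apply/funext => y; rewrite mxE.
by apply: smoothC_mul => //; apply: smoothC_cst.
Qed.

Lemma smoothM_dir A w : smoothM A -> smoothM (fun y => dirM A y w).
Proof.
move=> sA i j.
have -> : (fun y => (dirM A y w) i j) = (fun y => dirC (fun z => A z i j) y w).
  by apply/funext => y; rewrite mxE.
exact: smoothC_dir.
Qed.

Lemma dirM_mul A B x w : smoothM A -> smoothM B ->
  dirM (fun y => A y *m B y) x w = dirM A x w *m B x + A x *m dirM B x w.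
Proof.
move=> sA sB; apply/matrixP => i j; rewrite !mxE.
rewrite (@dirC_ext _ _ _ (fun y => \sum_k A y i k * B y k j)); last by move=> y; rewrite mxE.
rewrite dirC_sum; last by move=> k; apply: smoothC_mul.
rewrite -big_split /=; apply: eq_bigr => k _.
by rewrite dirC_mul // !mxE.
Qed.

Lemma dirM_add A B x w : smoothM A -> smoothM B ->
  dirM (fun y => A y + B y) x w = dirM A x w + dirM B x w.
Proof.
move=> sA sB; apply/matrixP => i j; rewrite !mxE.
rewrite (@dirC_ext _ _ _ (fun y => A y i j + B y i j)); last by move=> y; rewrite mxE.
by rewrite dirC_add.
Qed.

Lemma dirM_scale (c : R[i]) A x w : smoothM A ->
  dirM (fun y => c *: A y) x w = c *: dirM A x w.
Proof.
move=> sA; apply/matrixP => i j; rewrite !mxE.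
rewrite (@dirC_ext _ _ _ (fun y => c * A y i j)); last by move=> y; rewrite mxE.
by rewrite dirC_mul //; [rewrite dirC_cst mul0r add0r | apply: smoothC_cst].
Qed.

Lemma dirM_cst (M : Mat) x w : dirM (fun _ : V => M) x w = 0.
Proof. by apply/matrixP => i j; rewrite !mxE dirC_cst. Qed.

Lemma dirM_ext A B x w : (forall y, A y = B y) -> dirM A x w = dirM B x w.
Proof. by move=> E; have -> : A = B by apply/funext. Qed.

Lemma smoothC_trs A : smoothM A -> smoothC (fun y => trs deg (A y)).
Proof.
move=> sA; apply: smoothC_sum => i.
by apply: smoothC_mul => //; apply: smoothC_cst.
Qed.

Lemma dirC_trs A x w : smoothM A ->
  dirC (fun y => trs deg (A y)) x w = trs deg (dirM A x w).
Proof.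
move=> sA; rewrite /trs dirC_sum; last first.
  by move=> i; apply: smoothC_mul => //; apply: smoothC_cst.
apply: eq_bigr => i _; rewrite dirC_mul //; last exact: smoothC_cst.
by rewrite dirC_cst mul0r add0r mxE.
Qed.

Lemma homog_dirM A x w (k : int) :
  (forall y, homog deg k (A y)) -> homog deg k (dirM A x w).
Proof.
move=> hA i j; rewrite mxE => nz.
case: (eqVneq (deg i) (deg j + k)) => // ne.
move: nz; rewrite (@dirC_ext _ _ _ (fun _ => 0)) ?dirC_cst ?eqxx //.
move=> y; apply/eqP; apply: contraR ne => nz.
exact/eqP/(hA y _ _ nz).
Qed.

End Mx.


Section Alg.
Variables (R : realType) (n : nat) (deg : 'I_n -> int).
Notation Mat := 'M[R[i]]_n.
Notation t := (trs deg).
Implicit Types (A B C D : Mat).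

Lemma trsD A B : t (A + B) = t A + t B.
Proof. by rewrite /trs -big_split; apply: eq_bigr => i _; rewrite mxE mulrDr. Qed.

Lemma trsZ (c : R[i]) A : t (c *: A) = c * t A.
Proof. by rewrite /trs mulr_sumr; apply: eq_bigr => i _; rewrite mxE mulrCA. Qed.

Lemma trsN A : t (- A) = - t A.
Proof. by rewrite -scaleN1r trsZ mulN1r. Qed.

Lemma trsB A B : t (A - B) = t A - t B.
Proof. by rewrite trsD trsN. Qed.

Lemma trs1 A : t (1%:M *m A) = t A.
Proof. by rewrite mul1mx. Qed.

Lemma homog_mul (a b : int) A B : homog deg a A -> homog deg b B -> homog deg (a + b) (A *m B).
Proof.
move=> hA hB i j; rewrite mxE => nz.
have [k nzk] : exists k, A i k * B k j != 0.
  apply/existsP; apply: contraR nz => /existsPn H.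
  by apply/eqP; apply: big1 => k _; apply/eqP; move: (H k); rewrite negbK.
move: nzk; rewrite mulf_eq0 negb_or => /andP[n1 n2].
by rewrite (hA _ _ n1) (hB _ _ n2); ring.
Qed.

Lemma homog_add (a : int) A B : homog deg a A -> homog deg a B -> homog deg a (A + B).
Proof.
move=> hA hB i j; rewrite mxE => nz.
case: (eqVneq (A i j) 0) => [z|]; last by apply: hA.
by apply: hB; move: nz; rewrite z add0r.
Qed.

Lemma homog_opp (a : int) A : homog deg a A -> homog deg a (- A).
Proof. by move=> hA i j; rewrite mxE oppr_eq0; apply: hA. Qed.

Lemma homog_sub (a : int) A B : homog deg a A -> homog deg a B -> homog deg a (A - B).
Proof. by move=> hA hB; apply: homog_add => //; apply: homog_opp. Qed.

Lemma trsC (a : int) A B : homog deg a A -> t (A *m B) = (-1) ^ a * t (B *m A).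
Proof.
move=> hA; rewrite /trs.
under eq_bigr do rewrite mxE big_distrr.
rewrite mulr_sumr.
under [RHS]eq_bigr do rewrite mxE big_distrr mulr_sumr.
rewrite exchange_big /=; apply: eq_bigr => k _; apply: eq_bigr => i _.
case: (eqVneq (A i k) 0) => [->|nz]; first by rewrite !(mul0r, mulr0).
rewrite (hA _ _ nz) expfzDr ?oppr_eq0 ?oner_eq0 //; ring.
Qed.

Lemma trsC1 A B : homog deg 1 A -> t (A *m B) = - t (B *m A).
Proof. by move=> hA; rewrite (trsC _ hA) expr1z mulN1r. Qed.

Lemma trsCm1 A B : homog deg (-1) A -> t (A *m B) = - t (B *m A).
Proof. by move=> hA; rewrite (trsC _ hA) exprN1 invrN1 mulN1r. Qed.

Lemma trsC0 A B : homog deg 0 A -> t (A *m B) = t (B *m A).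
Proof. by move=> hA; rewrite (trsC _ hA) expr0z mul1r. Qed.

Lemma anti_l A B (X : Mat) : A *m B + B *m A = 0 -> B *m (A *m X) = - (A *m (B *m X)).
Proof.
move=> H; rewrite !mulmxA.
have -> : B *m A = - (A *m B) by apply/eqP; rewrite -addr_eq0 addrC H.
by rewrite mulNmx.
Qed.

End Alg.


Section Alg2.
Variables (R : realType) (n : nat) (deg : 'I_n -> int).
Notation Mat := 'M[R[i]]_n.
Notation t := (trs deg).
Implicit Types (A B C D U W F d v : Mat).

Lemma part3_alg A F d : homog deg 1 A -> homog deg 0 F -> A *m d + d *m A = 1%:M ->
  t (A *m (d *m F)) - t (A *m (F *m d)) = t F.
Proof.
move=> hA hF E.
have hAF : homog deg 1 (A *m F) := homog_mul hA hF.
rewrite [A *m (F *m d)]mulmxA (trsC1 _ hAF) opprK !mulmxA -trsD -mulmxDl E.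
by rewrite mul1mx.
Qed.

Lemma part1_alg A A' d v : homog deg 1 A -> homog deg 1 A' -> homog deg (-1) v ->
  A *m d + d *m A = 1%:M -> A' *m d + d *m A' = 1%:M -> d *m v + v *m d = 0 ->
  t (A *m v) = t (A' *m v).
Proof.
move=> hA hA' hv EA EA' Ev.
pose B := A - A'.
have hB : homog deg 1 B by apply: homog_sub.
have EB : B *m d + d *m B = 0.
  by rewrite /B mulmxBl mulmxBr addrACA -opprD EA EA' subrr.
suff : t (B *m v) = 0 by rewrite /B mulmxBl trsB => /eqP; rewrite subr_eq0 => /eqP.
have -> : B *m v = B *m v *m (A *m d + d *m A) by rewrite EA mulmx1.
rewrite mulmxDr trsD.
have h1 : homog deg 1 (B *m v *m A) := homog_mul (homog_mul hB hv) hA.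
rewrite mulmxA (trsC1 _ h1).
have X1 : d *m (B *m v *m A) = B *m v *m d *m A.
  rewrite -!mulmxA (anti_l _ EB).
  have Ev' : v *m d + d *m v = 0 by rewrite addrC.
  by rewrite (anti_l _ Ev') mulmxN opprK.
by rewrite X1 -!mulmxA addNr.
Qed.

Lemma key_zero A d U W : homog deg 1 A -> homog deg (-1) d ->
  A *m d + d *m A = 1%:M -> U *m d + d *m U = 0 -> W *m d + d *m W = 0 ->
  t (A *m (A *m (U *m W))) = 0.
Proof.
move=> hA hd EA EU EW.
have AAd : forall Z : Mat, A *m (A *m (d *m Z)) = d *m (A *m (A *m Z)).
  have e1 : A *m d = 1%:M - d *m A by rewrite -EA addrK.
  have e2 : d *m A = 1%:M - A *m d by rewrite -EA addrC addKr.
  move=> Z; rewrite (mulmxA A d Z) e1 mulmxBl mul1mx mulmxBr -(mulmxA d A Z).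
  rewrite (mulmxA A d) e1 mulmxBl mul1mx opprB addrC subrK.
  by rewrite -mulmxA.
have Wd : W *m d = - (d *m W) by apply/eqP; rewrite -addr_eq0 EW.
have EU' : d *m U + U *m d = 0 by rewrite addrC.
have -> : U = U *m (A *m d + d *m A) by rewrite EA mulmx1.
rewrite mulmxDr mulmxDl !mulmxDr trsD -!mulmxA.
rewrite (anti_l _ EU') !mulmxN AAd trsN (trsCm1 _ hd) opprK -!mulmxA Wd !mulmxN.
by rewrite trsN subrr.
Qed.

Lemma keyA A d U W A1 : homog deg 1 A -> homog deg (-1) d -> homog deg (-1) U ->
  homog deg 1 A1 -> homog deg (-1) W ->
  A *m d + d *m A = 1%:M -> W *m d + d *m W = 0 ->
  A1 *m d + A *m U + (U *m A + d *m A1) = 0 ->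
  t (A1 *m W) = - t (A *m (A *m (U *m W))) + t (U *m (A *m (W *m A))).
Proof.
move=> hA hd hU hA1 hW EA EW E1.
have -> : A1 *m W = A1 *m W *m (A *m d + d *m A) by rewrite EA mulmx1.
rewrite mulmxDr trsD.
have h1 : homog deg 1 (A1 *m W *m A) := homog_mul (homog_mul hA1 hW) hA.
rewrite mulmxA (trsC1 _ h1).
have Wd : W *m d = - (d *m W) by apply/eqP; rewrite -addr_eq0 EW.
have -> : A1 *m W *m (d *m A) = - (A1 *m d *m W *m A).
  by rewrite -!mulmxA (mulmxA W d) Wd mulNmx mulmxN -mulmxA.
rewrite trsN -opprD -trsD !mulmxA -mulmxDl -mulmxDl.
have E1' : d *m A1 + A1 *m d + (A *m U + U *m A) = 0.
  by rewrite [d *m A1 + _]addrC addrACA [d *m A1 + _]addrC.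
have -> : d *m A1 + A1 *m d = - (A *m U + U *m A).
  by apply/eqP; rewrite -addr_eq0 E1'.
rewrite !mulNmx trsN opprK !mulmxDl trsD.
have h2 : homog deg (-1) (A *m U *m W) := homog_mul (homog_mul hA hU) hW.
rewrite (trsCm1 _ h2) -!mulmxA.
by [].
Qed.

Lemma key_sym A d W1 W2 A1 A2 : homog deg 1 A -> homog deg (-1) d ->
  homog deg (-1) W1 -> homog deg (-1) W2 -> homog deg 1 A1 -> homog deg 1 A2 ->
  A *m d + d *m A = 1%:M -> W1 *m d + d *m W1 = 0 -> W2 *m d + d *m W2 = 0 ->
  A1 *m d + A *m W1 + (W1 *m A + d *m A1) = 0 ->
  A2 *m d + A *m W2 + (W2 *m A + d *m A2) = 0 ->
  t (A1 *m W2) = t (A2 *m W1).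
Proof.
move=> hA hd h1 h2 hA1 hA2 EA E1 E2 F1 F2.
rewrite (keyA hA hd h1 hA1 h2 EA E2 F1) (keyA hA hd h2 hA2 h1 EA E1 F2).
rewrite (key_zero hA hd EA E1 E2) (key_zero hA hd EA E2 E1).
have h0 : homog deg 0 (W1 *m A) by have := homog_mul h1 hA; exact.
rewrite !mulmxA -(mulmxA (W1 *m A)) (trsC0 _ h0).
by rewrite !mulmxA.
Qed.
End Alg2.


Section Final.
Variables (R : realType) (n : nat) (deg : 'I_n -> int).
Notation Mat := 'M[R[i]]_n.

Lemma schwarzR m (F : prm R m -> R) (u v x : prm R m) : smoothR F ->
  'D_u (fun y => 'D_v (F : prm R m -> R^o) y : R^o) x = 'D_v (fun y => 'D_u (F : prm R m -> R^o) y : R^o) x.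
Proof.
move=> s1.
apply: (@schwarz R (prm R m) F u v x).
- by move=> y; apply: smoothR_derivable.
- by move=> y; apply: smoothR_derivable.
- by move=> y; apply: (diter_der (vs := [:: v])).
- by move=> y; apply: (diter_der (vs := [:: u])).
- have H := (diter_cont (vs := [:: u; v]) s1); exact: H.
- have H := (diter_cont (vs := [:: v; u]) s1); exact: H.
Qed.

Lemma schwarzC m (g : prm R m -> R[i]) (u v x : prm R m) : smoothC g ->
  dirC (fun y => dirC g y v) x u = dirC (fun y => dirC g y u) x v.
Proof.
case=> s1 s2.
have E : forall a b, dirC (fun y => dirC g y b) x a =
  Complex ('D_a (fun y => 'D_b (fun z => complex.Re (g z) : R^o) y : R^o) x)
          ('D_a (fun y => 'D_b (fun z => complex.Im (g z) : R^o) y : R^o) x).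
  by [].
by rewrite !E (schwarzR u v x s1) (schwarzR u v x s2).
Qed.

Lemma deriv_props m (phi : prm R m -> Mat) x w : smoothM phi -> mapsInto deg phi ->
  homog deg (-1) (dirM phi x w) /\ phi x *m dirM phi x w + dirM phi x w *m phi x = 0.
Proof.
move=> sphi mphi; split.
  by apply: homog_dirM => y; case: (mphi y).
have := dirM_mul x w sphi sphi.
rewrite (@dirM_ext _ _ _ _ (fun _ => 0)) ?dirM_cst.
  by move=> E; rewrite addrC -E.
by move=> y; case: (mphi y) => _ [].
Qed.

Lemma tangent_props (d v : Mat) : tangent deg d v -> homog deg (-1) v /\ d *m v + v *m d = 0.
Proof. by case=> m [phi [x [w [sphi mphi <- <-]]]]; apply: deriv_props. Qed.

Lemma dirC_kap m (A W : prm R m -> Mat) x u (c : R[i]) : smoothM A -> smoothM W ->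
  dirC (fun y => trs deg (c *: (A y *m W y))) x u =
  c * (trs deg (dirM A x u *m W x) + trs deg (A x *m dirM W x u)).
Proof.
move=> sA sW.
have sAW : smoothM (fun y => A y *m W y) := smoothM_mul sA sW.
have sc : smoothM (fun y => c *: (A y *m W y)) := smoothM_scale c sAW.
have E1 : dirC (fun y => trs deg (c *: (A y *m W y))) x u =
   trs deg (dirM (fun y => c *: (A y *m W y)) x u) := dirC_trs deg x u sc.
have E2 : dirM (fun y => c *: (A y *m W y)) x u = c *: dirM (fun y => A y *m W y) x u
  := dirM_scale c x u sAW.
by rewrite E1 E2 trsZ (dirM_mul x u sA sW) trsD.
Qed.

Lemma dirM_schwarz m (phi : prm R m -> Mat) (u v x : prm R m) : smoothM phi ->
  dirM (fun y => dirM phi y v) x u = dirM (fun y => dirM phi y u) x v.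
Proof.
move=> sphi; apply/matrixP => i j.
have E : forall a b, dirM (fun y => dirM phi y b) x a i j
    = dirC (fun y => dirC (fun z => phi z i j) y b) x a.
  by move=> a b; rewrite mxE; apply: dirC_ext => y; rewrite mxE.
apply: (etrans (E u v)); apply: esym; apply: (etrans (E v u)); apply: esym.
exact: schwarzC.
Qed.

End Final.

Theorem mainTheorem12 (R : realType) (n : nat) (deg : 'I_n -> int)
  (nonempty : exists d : 'M[R[i]]_n, exact_diff deg d)
  (alpha : 'M[R[i]]_n -> 'M[R[i]]_n)
  (Halpha : admissible_alpha deg alpha) :
  [/\ (forall alpha' : 'M[R[i]]_n -> 'M[R[i]]_n, admissible_alpha deg alpha' ->
         forall d v, exact_diff deg d -> tangent deg d v ->
           kappa deg alpha d v = kappa deg alpha' d v),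
      closed_sform deg (kappa deg alpha) &
      (forall f : eform R n, form_section deg 0 f ->
         forall d v, exact_diff deg d -> tangent deg d v ->
           trs_form deg (lmul 1 alpha (scomm f 0 (@taut R n) 1)) d v
           = trs_form deg f d v)].
Proof.
case: Halpha => sA hA.
split.
- move=> alpha' [_ hA'] d v hd tv.
  have [hv Ev] := tangent_props tv.
  have [h1 E1] := hA d hd. have [h1' E1'] := hA' d hd.
  rewrite /kappa /trs_form /lmul /d_delta !trsZ.
  by rewrite (part1_alg h1 h1' hv E1 E1' Ev).
- split.
    move=> m phi w sphi mphi; rewrite /kappa /trs_form /lmul /d_delta.
    apply: smoothC_trs; apply: smoothM_scale; apply: smoothM_mul; first exact: sA.
    exact: smoothM_dir.
  move=> phi sphi mphi x e1 e2; clearbody e1 e2; rewrite /kappa /trs_form /lmul /d_delta.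
  have sAp := sA 2%N phi sphi mphi.
  have K : forall u w, dirC (fun y => trs deg ((-1)^+1 *: (alpha (phi y) *m dirM phi y w))) x u =
     (-1)^+1 * (trs deg (dirM (fun y => alpha (phi y)) x u *m dirM phi x w)
        + trs deg (alpha (phi x) *m dirM (fun y => dirM phi y w) x u)).
    by move=> u w; exact: (dirC_kap deg x u ((-1)^+1) sAp (smoothM_dir w sphi)).
  apply: (etrans (K e1 e2)); apply: esym; apply: (etrans (K e2 e1)); apply: esym.
  have SW : dirM (fun y => dirM phi y e2) x e1 = dirM (fun y => dirM phi y e1) x e2
    := dirM_schwarz e1 e2 x sphi.
  have [hd _] := mphi x.
  have [hAx EA] := hA (phi x) (mphi x).
  have [hW1 EW1] := deriv_props x e1 sphi mphi.
  have [hW2 EW2] := deriv_props x e2 sphi mphi.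
  have hAd : forall w, homog deg 1 (dirM (fun y => alpha (phi y)) x w).
    by move=> w; apply: homog_dirM => y; case: (hA (phi y) (mphi y)).
  have FF : forall w, dirM (fun y => alpha (phi y)) x w *m phi x + alpha (phi x) *m dirM phi x w
      + (dirM phi x w *m alpha (phi x) + phi x *m dirM (fun y => alpha (phi y)) x w) = 0.
    move=> w.
    have := dirM_add x w (smoothM_mul sAp sphi) (smoothM_mul sphi sAp).
    rewrite (dirM_mul x w sAp sphi) (dirM_mul x w sphi sAp).
    rewrite (@dirM_ext _ _ _ _ (fun _ => 1%:M)) ?dirM_cst.
      by move=> E; rewrite -E.
    by move=> y; case: (hA (phi y) (mphi y)).
  rewrite addrC in EW1; rewrite addrC in EW2.
  have E1 : trs deg (dirM (fun y => alpha (phi y)) x e1 *m dirM phi x e2)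
          = trs deg (dirM (fun y => alpha (phi y)) x e2 *m dirM phi x e1)
    := key_sym hAx hd hW1 hW2 (hAd e1) (hAd e2) EA EW1 EW2 (FF e1) (FF e2).
  have E2 : trs deg (alpha (phi x) *m dirM (fun y => dirM phi y e2) x e1)
          = trs deg (alpha (phi x) *m dirM (fun y => dirM phi y e1) x e2)
    := congr1 (fun M => trs deg (alpha (phi x) *m M)) SW.
  exact: (congr1 (fun z => (-1)^+1 * z) (congr2 (fun a b => a + b) E1 E2)).
- move=> f [hf _ _] d v hd tv.
  have hF := hf d v hd tv.
  have [h1 E1] := hA d hd.
  rewrite /trs_form /lmul /scomm /rmul /lmul /taut /=.
  rewrite !expr1 !scaleN1r opprK trsN mulmxBr trsB opprB.
  exact: part3_alg h1 hF E1.
Qed.
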